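(* Let $t$ be an indeterminate and define polynomials $P_n,Y_n\in\mathbb{Z}[t]$ by $P_0=Y_0=1$ and, for $n\ge1$, $$P_n=(2t+1)P_{n-1}+2t(t+1)Y_{n-1},\qquad Y_n=2P_{n-1}+(2t+1)Y_{n-1}.$$ Put $y_n=\tfrac12(Y_n-1)$ and $$q_n=\frac{(P_n-Y_n)\big((2t^2+4t+1)Y_n+(2t+3)P_n\big)}{4(t^2+t-1)}.$$ Then for every $n\ge0$: $y_n\in\mathbb{Z}[t]$, $q_n\in\mathbb{Z}[t]$, $t(t+1)\,y_n(y_n+1)=p_n(p_n+1)$ with $p_n=\tfrac12(P_n-1)\in\mathbb{Z}[t]$, and $$y_n(y_n+1)\,y_{n+1}(y_{n+1}+1)=q_n(q_n+1).$$ *)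

(* Defs.v *)
From HB Require Import structures.
From mathcomp Require Import all_boot all_order all_algebra.
Set Implicit Arguments. Unset Strict Implicit. Unset Printing Implicit Defensive.
Import Order.TTheory GRing.Theory Num.Theory.
Local Open Scope ring_scope.

Fixpoint PY (n : nat) : {poly int} * {poly int} :=
  match n with
  | 0%N => (1, 1)
  | m.+1 =>
      let: (P, Y) := PY m in
      ((2%:P * 'X + 1) * P + 2%:P * 'X * ('X + 1) * Y,
       2%:P * P + (2%:P * 'X + 1) * Y)
  end.

Definition Ppol (n : nat) : {poly int} := (PY n).1.
Definition Ypol (n : nat) : {poly int} := (PY n).2.

(* Main.v *)
Require Import Defs.
From HB Require Import structures.
From mathcomp Require Import all_boot all_order all_algebra.
From mathcomp Require Import ring.
Import Order.TTheory GRing.Theory Num.Theory.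
Local Open Scope ring_scope.

Lemma PY_S n : Ppol n.+1 = (2%:P * 'X + 1) * Ppol n + 2%:P * 'X * ('X + 1) * Ypol n
  /\ Ypol n.+1 = 2%:P * Ppol n + (2%:P * 'X + 1) * Ypol n.
Proof. by rewrite /Ppol /Ypol /=; case: (PY n). Qed.

Lemma PC2 : (2%:P : {poly int}) = 2. Proof. by rewrite polyC_natr. Qed.
Lemma PC3 : (3%:P : {poly int}) = 3. Proof. by rewrite polyC_natr. Qed.
Lemma PC4 : (4%:P : {poly int}) = 4. Proof. by rewrite polyC_natr. Qed.

Lemma inv n : exists p y : {poly int}, Ppol n = 2%:P * p + 1 /\ Ypol n = 2%:P * y + 1 /\
  'X * ('X + 1) * (y * (y + 1)) = p * (p + 1).
Proof.
elim: n => [|n [p [y [hp [hy hr]]]]].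
  exists 0, 0; rewrite /Ppol /Ypol /=; split; [|split]; ring.
have [h1 h2] := PY_S n.
exists ((2 * 'X + 1) * p + 2 * 'X * ('X + 1) * y + 'X ^+ 2 + 2 * 'X).
exists (2 * p + (2 * 'X + 1) * y + 'X + 1).
rewrite h1 h2 hp hy !PC2; split; [ring|split; [ring|]].
apply/eqP; rewrite -subr_eq0; apply/eqP.
transitivity (('X * ('X + 1) * (y * (y + 1)) - p * (p + 1))).
  ring.
by rewrite hr subrr.
Qed.

Theorem mainTheorem6 (n : nat) :
  exists (y y' p q : {poly int}),
    Ypol n = 2%:P * y + 1 /\
        Ypol n.+1 = 2%:P * y' + 1 /\
        Ppol n = 2%:P * p + 1 /\
        4%:P * ('X ^+ 2 + 'X - 1) * q
          = (Ppol n - Ypol n)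
            * ((2%:P * 'X ^+ 2 + 4%:P * 'X + 1) * Ypol n
               + (2%:P * 'X + 3%:P) * Ppol n) /\
        'X * ('X + 1) * (y * (y + 1)) = p * (p + 1) /\
        y * (y + 1) * (y' * (y' + 1)) = q * (q + 1).
Proof.
have [p [y [hp [hy hr]]]] := inv n.
have [_ h2] := PY_S n.
rewrite !PC2 in hp hy.
exists y, (2 * p + (2 * 'X + 1) * y + 'X + 1), p,
  ((2 * 'X + 1) * (y * (y + 1)) + 2 * p * y + p + y).
rewrite h2 hp hy !PC2 !PC3 !PC4.
split; first ring. split; first ring. split; first ring.
have hr0 : 'X * ('X + 1) * (y * (y + 1)) - p * (p + 1) = 0 by rewrite hr subrr.
split.
  apply/eqP; rewrite -subr_eq0; apply/eqP.
  transitivity (4 * (2 * 'X + 3) * ('X * ('X + 1) * (y * (y + 1)) - p * (p + 1))).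
    ring.
  by rewrite hr0 mulr0.
split; first by [].
apply/eqP; rewrite -subr_eq0; apply/eqP.
transitivity ('X * ('X + 1) * (y * (y + 1)) - p * (p + 1)); first ring.
exact: hr0.
Qed.
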